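(* Let $G$ be a free group on $k\ge 2$ generators and let $\Phi$ be a uniformly continuous action of $G$ on a non-discrete metric space $\Omega$. (1) If for some $g\in G$ the homeomorphism $f_g$ is expansive (on $\Omega$), then $\Phi$ does not have the shadowing property. (2) If for some $g\in G$ with $g\neq e$ the homeomorphism $f_g$ does not have the shadowing property, then $\Phi$ does not have the shadowing property.
   Context: An action of a group $G$ on a metric space $(\Omega,\mathrm{dist})$ is a map $\Phi:G\times\Omega\to\Omega$ such that each $f_g=\Phi(g,\cdot)$ is a homeomorphism, $\Phi(e,x)=x$, and $\Phi(g_1g_2,x)=\Phi(g_1,\Phi(g_2,x))$. For a finitely generated $G$, the action is uniformly continuous if for some finite symmetric generating set $S$ (symmetric: $s\in S\Rightarrow s^{-1}\in S$) all maps $f_s$, $s\in S$, are uniformly continuous. Fix a finite symmetric generating set $S$ of $G$. For $d>0$, a family $\{y_g\}_{g\in G}\subset\Omega$ is a $d$-pseudotrajectory if $\mathrm{dist}(y_{sg},f_s(y_g))<d$ for all $s\in S$, $g\in G$. The action has the shadowing property if for every $\varepsilon>0$ there is $d>0$ such that for every $d$-pseudotrajectory $\{y_g\}$ there is $x_e\in\Omega$ with $\mathrm{dist}(y_g,f_g(x_e))<\varepsilon$ for all $g\in G$ (this does not depend on the choice of $S$). A homeomorphism $f$ of $\Omega$ has the shadowing property if the $\mathbb Z$-action $(j,x)\mapsto f^j(x)$ with generating set $\{1,-1\}$ has it, i.e. for every $\varepsilon>0$ there is $d>0$ such that every sequence $\{x_j\}_{j\in\mathbb Z}$ with $\mathrm{dist}(x_{j+1},f(x_j))<d$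 (equivalently, also controlling $\mathrm{dist}(x_{j-1},f^{-1}(x_j))$ as required by the symmetric generating set) admits $u$ with $\mathrm{dist}(x_j,f^j(u))<\varepsilon$ for all $j$. The homeomorphism $f$ is expansive on $\Omega$ if there is $\Delta>0$ such that $\mathrm{dist}(f^j(x_1),f^j(x_2))<\Delta$ for all $j\in\mathbb Z$ implies $x_1=x_2$. *)

(* Defs.v *)
From Stdlib Require Import Reals Lra Lia ZArith Arith List Bool.
Import ListNotations.
Open Scope R_scope.

Definition is_metric {Omega : Type} (dist : Omega -> Omega -> R) : Prop :=
  (forall x y, 0 <= dist x y) /\
  (forall x y, dist x y = 0 <-> x = y) /\
  (forall x y, dist x y = dist y x) /\
  (forall x y z, dist x z <= dist x y + dist y z).

Definition non_discrete {Omega : Type} (dist : Omega -> Omega -> R) : Prop :=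
  exists x, forall r, 0 < r -> exists y, y <> x /\ dist x y < r.

Definition continuous_m {Omega : Type} (dist : Omega -> Omega -> R)
  (f : Omega -> Omega) : Prop :=
  forall x eps, 0 < eps -> exists delta, 0 < delta /\
    forall y, dist x y < delta -> dist (f x) (f y) < eps.

Definition unif_continuous {Omega : Type} (dist : Omega -> Omega -> R)
  (f : Omega -> Omega) : Prop :=
  forall eps, 0 < eps -> exists delta, 0 < delta /\
    forall x y, dist x y < delta -> dist (f x) (f y) < eps.

Definition inverse_pair {Omega : Type} (f finv : Omega -> Omega) : Prop :=
  (forall x, finv (f x) = x) /\ (forall x, f (finv x) = x).

Definition homeomorphism {Omega : Type} (dist : Omega -> Omega -> R)
  (f : Omega -> Omega) : Prop :=
  exists finv, inverse_pair f finv /\ continuous_m dist f /\ continuous_m dist finv.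

Fixpoint iter_n {A : Type} (n : nat) (f : A -> A) (x : A) : A :=
  match n with O => x | S n' => f (iter_n n' f x) end.

Definition zpow {A : Type} (f finv : A -> A) (j : Z) : A -> A :=
  match j with
  | Z0 => fun x => x
  | Zpos p => iter_n (Pos.to_nat p) f
  | Zneg p => iter_n (Pos.to_nat p) finv
  end.

(** Shadowing for the Z-action generated by f (generating set {1,-1}). *)
Definition hom_shadowing_with {Omega : Type} (dist : Omega -> Omega -> R)
  (f finv : Omega -> Omega) : Prop :=
  forall eps, 0 < eps -> exists d, 0 < d /\
    forall x : Z -> Omega,
      (forall j, dist (x (j + 1)%Z) (f (x j)) < d /\
                 dist (x (j - 1)%Z) (finv (x j)) < d) ->
      exists u, forall j, dist (x j) (zpow f finv j u) < eps.

(** The inverse of a bijection is unique, so "some inverse" = "the inverse". *)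
Definition hom_shadowing {Omega : Type} (dist : Omega -> Omega -> R)
  (f : Omega -> Omega) : Prop :=
  exists finv, inverse_pair f finv /\ hom_shadowing_with dist f finv.

Definition expansive {Omega : Type} (dist : Omega -> Omega -> R)
  (f : Omega -> Omega) : Prop :=
  exists finv, inverse_pair f finv /\
    exists Delta, 0 < Delta /\
      forall x1 x2, (forall j, dist (zpow f finv j x1) (zpow f finv j x2) < Delta) ->
        x1 = x2.

(** A letter (i, true) stands for a_i, (i, false) for a_i^{-1}. *)
Definition letter : Type := (nat * bool)%type.
Definition linv (l : letter) : letter := (fst l, negb (snd l)).

Definition letter_eq_dec (l1 l2 : letter) : {l1 = l2} + {l1 <> l2}.
Proof. decide equality; [apply bool_dec | apply Nat.eq_dec]. Defined.

Fixpoint reduced (w : list letter) : Prop :=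
  match w with
  | [] => True
  | l :: w' => match w' with
               | [] => True
               | l' :: _ => l' <> linv l /\ reduced w'
               end
  end.

Definition valid (k : nat) (w : list letter) : Prop :=
  Forall (fun l => (fst l < k)%nat) w.

Definition lmul (l : letter) (w : list letter) : list letter :=
  match w with
  | [] => [l]
  | l' :: w' => if letter_eq_dec l' (linv l) then w' else l :: w
  end.

Definition wmul (u v : list letter) : list letter := fold_right lmul v u.

Lemma reduced_tail l w : reduced (l :: w) -> reduced w.
Proof. destruct w; simpl; tauto. Qed.

Lemma lmul_reduced l w : reduced w -> reduced (lmul l w).
Proof.
  destruct w as [|l' w']; simpl; [tauto|].
  destruct (letter_eq_dec l' (linv l)); intros H.
  - exact (reduced_tail _ _ H).
  - simpl; split; assumption.
Qed.

Lemma lmul_valid k l w : (fst l < k)%nat -> valid k w -> valid k (lmul l w).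
Proof.
  intros Hl Hw; destruct w as [|l' w']; simpl.
  - constructor; [exact Hl | constructor].
  - destruct (letter_eq_dec l' (linv l)).
    + inversion Hw; assumption.
    + constructor; assumption.
Qed.

Lemma wmul_reduced u v : reduced v -> reduced (wmul u v).
Proof. induction u; simpl; auto using lmul_reduced. Qed.

Lemma wmul_valid k u v : valid k u -> valid k v -> valid k (wmul u v).
Proof.
  induction u as [|a u IH]; simpl; intros Hu Hv; auto.
  inversion Hu; subst; apply lmul_valid; auto.
Qed.

Record FG (k : nat) : Type := mkFG {
  fg_word : list letter;
  fg_valid : valid k fg_word;
  fg_red : reduced fg_word }.
Arguments mkFG {k}.
Arguments fg_word {k}.
Arguments fg_valid {k}.
Arguments fg_red {k}.

Definition fg_e (k : nat) : FG k := mkFG [] (Forall_nil _) I.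

Definition fg_mul {k : nat} (g h : FG k) : FG k :=
  mkFG (wmul (fg_word g) (fg_word h))
       (wmul_valid k _ _ (fg_valid g) (fg_valid h))
       (wmul_reduced _ _ (fg_red h)).

Lemma letter_valid (k i : nat) (b : bool) (H : (i < k)%nat) : valid k [(i, b)].
Proof. constructor; [exact H | constructor]. Qed.

Definition fg_letter {k : nat} (i : nat) (b : bool) (H : (i < k)%nat) : FG k :=
  mkFG [(i, b)] (letter_valid k i b H) I.

Definition is_action {k : nat} {Omega : Type} (dist : Omega -> Omega -> R)
  (Phi : FG k -> Omega -> Omega) : Prop :=
  (forall g, homeomorphism dist (Phi g)) /\
  (forall x, Phi (fg_e k) x = x) /\
  (forall g1 g2 x, Phi (fg_mul g1 g2) x = Phi g1 (Phi g2 x)).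

Definition unif_continuous_action {k : nat} {Omega : Type}
  (dist : Omega -> Omega -> R) (Phi : FG k -> Omega -> Omega) : Prop :=
  forall i b (H : (i < k)%nat), unif_continuous dist (Phi (fg_letter i b H)).

Definition pseudotrajectory {k : nat} {Omega : Type}
  (dist : Omega -> Omega -> R) (Phi : FG k -> Omega -> Omega)
  (d : R) (y : FG k -> Omega) : Prop :=
  forall i b (H : (i < k)%nat) (g : FG k),
    dist (y (fg_mul (fg_letter i b H) g)) (Phi (fg_letter i b H) (y g)) < d.

Definition action_shadowing {k : nat} {Omega : Type}
  (dist : Omega -> Omega -> R) (Phi : FG k -> Omega -> Omega) : Prop :=
  forall eps, 0 < eps -> exists d, 0 < d /\
    forall y, pseudotrajectory dist Phi d y ->
      exists xe, forall g, dist (y g) (Phi g xe) < eps.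

(* Main.v *)
Require Import Defs.
From Stdlib Require Import Reals Lra Lia ZArith Arith List Bool.
From Stdlib Require Import ProofIrrelevance FunctionalExtensionality ClassicalEpsilon Classical.
Import ListNotations.
Open Scope R_scope.

Definition dl : letter := (0%nat, true).
Definition inv (w : list letter) : list letter := rev (map linv w).

Lemma linv_inv l : linv (linv l) = l.
Proof. destruct l; unfold linv; simpl; rewrite negb_involutive; auto. Qed.

Lemma linv_neq l : l <> linv l.
Proof. destruct l as [i b]; unfold linv; simpl; intro H; injection H; destruct b; discriminate. Qed.

Lemma linv_inj a b : linv a = linv b -> a = b.
Proof. intro H. rewrite <- (linv_inv a), <- (linv_inv b), H. auto. Qed.

Lemma inv_app a b : inv (a ++ b) = inv b ++ inv a.
Proof. unfold inv; rewrite map_app, rev_app_distr; auto. Qed.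

Lemma inv_cons l a : inv (l :: a) = inv a ++ [linv l].
Proof. reflexivity. Qed.

Lemma inv_inv a : inv (inv a) = a.
Proof. unfold inv. rewrite map_rev, rev_involutive, map_map.
  erewrite map_ext; [apply map_id|]. intro; apply linv_inv. Qed.

Lemma inv_nil : inv [] = [].
Proof. reflexivity. Qed.

Lemma length_inv a : length (inv a) = length a.
Proof. unfold inv; rewrite length_rev, length_map; auto. Qed.

Lemma last_default (l : list letter) d d' : l <> [] -> last l d = last l d'.
Proof. induction l as [|a l IH]; intros H; [congruence|].
  destruct l; simpl; auto. apply IH; discriminate. Qed.

Lemma last_cons (a : letter) l d : last (a :: l) d = last l a.
Proof. destruct l; [reflexivity|]. change (last (l :: l0) d = last (l :: l0) a).
  apply last_default; discriminate. Qed.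

Lemma last_app (x y : list letter) d : last (x ++ y) d = last y (last x d).
Proof. revert d; induction x as [|a x IH]; intro d; [reflexivity|].
  change ((a :: x) ++ y) with (a :: (x ++ y)). rewrite !last_cons. apply IH. Qed.

Lemma hd_app (x y : list letter) d : x <> [] -> hd d (x ++ y) = hd d x.
Proof. destruct x; simpl; congruence. Qed.

Lemma hd_inv x d : x <> [] -> hd d (inv x) = linv (last x d).
Proof. induction x as [|a x IH]; intro H; [congruence|].
  rewrite inv_cons. destruct x.
  - simpl. auto.
  - rewrite hd_app. rewrite IH by discriminate. rewrite (last_cons a).
    f_equal. apply last_default; discriminate.
    unfold inv; simpl. intro E. apply app_eq_nil in E. destruct E; discriminate. Qed.

Lemma last_inv x d : x <> [] -> last (inv x) d = linv (hd d x).
Proof. intro H. rewrite <- (inv_inv x) at 2. rewrite hd_inv.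
  rewrite linv_inv. auto. intro E. rewrite <- (inv_inv x) in H. rewrite E in H. apply H; auto. Qed.

Definition joinable (x y : list letter) : Prop :=
  x = [] \/ y = [] \/ hd dl y <> linv (last x dl).

Lemma reduced_cons (a : letter) y : reduced (a :: y) <-> reduced y /\ (y = [] \/ hd dl y <> linv a).
Proof. destruct y as [|b y]; simpl; [tauto|]. split; [intros [H1 H2]; split; auto; right; auto|].
  intros [H1 [H2|H2]]; [discriminate|]; auto. Qed.

Lemma reduced_app x y : reduced (x ++ y) <-> reduced x /\ reduced y /\ joinable x y.
Proof. induction x as [|a x IH].
  - simpl. unfold joinable. tauto.
  - change ((a :: x) ++ y) with (a :: (x ++ y)). rewrite reduced_cons, IH, reduced_cons.
    unfold joinable. destruct x as [|c x].
    + simpl. intuition discriminate.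
    + assert (Hl : last (a :: c :: x) dl = last (c :: x) dl) by (simpl; auto).
      rewrite Hl. rewrite hd_app by discriminate. simpl hd.
      intuition discriminate.
Qed.

Lemma reduced_inv x : reduced x -> reduced (inv x).
Proof. induction x as [|a x IH]; intro H; [simpl; auto|].
  rewrite inv_cons. apply reduced_cons in H. destruct H as [Hx J].
  apply reduced_app. split; [auto|]. split; [simpl; auto|].
  unfold joinable. destruct x as [|b x]; [left; reflexivity|]. right; right.
  rewrite last_inv by discriminate. change (hd dl [linv a]) with (linv a).
  change (hd dl (b :: x)) with b. change (hd dl (b :: x)) with b in J.
  destruct J as [J|J]; [discriminate|].
  rewrite linv_inv. intro E. apply J. rewrite <- E. reflexivity. Qed.

Fixpoint lpow (x : list letter) (n : nat) : list letter :=
  match n with O => [] | S n' => x ++ lpow x n' end.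

Definition cyc (w : list letter) : Prop := w <> [] /\ hd dl w <> linv (last w dl).

Lemma length_lpow x n : length (lpow x n) = (n * length x)%nat.
Proof. induction n; simpl; auto. rewrite length_app, IHn. lia. Qed.

Lemma valid_app k x y : valid k x -> valid k y -> valid k (x ++ y).
Proof. intros; apply Forall_app; auto. Qed.

Lemma valid_app_inv k x y : valid k (x ++ y) -> valid k x /\ valid k y.
Proof. apply Forall_app. Qed.

Lemma valid_inv k x : valid k x -> valid k (inv x).
Proof. intro H. unfold inv, valid. apply Forall_rev. apply Forall_map.
  eapply Forall_impl; [|exact H]. intros a Ha. unfold linv; simpl. exact Ha. Qed.

Lemma valid_lpow k x n : valid k x -> valid k (lpow x n).
Proof. intro H; induction n; simpl; [constructor|]. apply valid_app; auto. Qed.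

Lemma hd_lpow x n : x <> [] -> hd dl (lpow x (S n)) = hd dl x.
Proof. intro H. simpl. apply hd_app; auto. Qed.

Lemma last_lpow_gen x n c : x <> [] -> last (lpow x n) (last x c) = last x c.
Proof. intro H. induction n; simpl; auto. rewrite last_app.
  rewrite (last_default x (last x c) c) by auto. auto. Qed.

Lemma last_lpow x n c : x <> [] -> last (lpow x (S n)) c = last x c.
Proof. intro H. simpl. rewrite last_app. apply last_lpow_gen; auto. Qed.

Lemma lpow_nonempty x n : x <> [] -> lpow x (S n) <> [].
Proof. intros H E. simpl in E. apply app_eq_nil in E. tauto. Qed.

Lemma reduced_lpow x n : cyc x -> reduced x -> reduced (lpow x n).
Proof. intros [Hn Hc] Hr. induction n; simpl; auto.
  apply reduced_app. repeat split; auto. unfold joinable. destruct n; [right; left; reflexivity|].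
  right; right. rewrite hd_lpow by auto. auto. Qed.

Lemma cyc_inv x : cyc x -> cyc (inv x).
Proof. intros [Hn Hc]. split.
  - intro E. apply Hn. rewrite <- (inv_inv x), E. reflexivity.
  - rewrite hd_inv by auto. rewrite last_inv by auto. rewrite linv_inv.
    intro E. apply Hc. rewrite <- E. reflexivity. Qed.

Lemma reduced_conj u x n : cyc x -> reduced (u ++ x ++ inv u) ->
  reduced (u ++ lpow x (S n) ++ inv u).
Proof. intros Hc H. destruct Hc as [Hn Hcc].
  apply reduced_app in H. destruct H as [Hu [H J1]].
  apply reduced_app in H. destruct H as [Hx [Hiu J2]].
  apply reduced_app. split; auto. split.
  - apply reduced_app. split; [apply reduced_lpow; [split; auto|auto]|]. split; auto.
    unfold joinable in *. rewrite last_lpow by auto. tauto.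
  - unfold joinable in *. destruct J1 as [J1|[J1|J1]]; [left; auto| |].
    + apply app_eq_nil in J1. tauto.
    + right; right. rewrite hd_app in * by (auto; apply lpow_nonempty; auto).
      rewrite hd_lpow by auto. auto. Qed.

Lemma decomp_aux : forall N g, (length g <= N)%nat -> reduced g -> g <> [] ->
  exists u w, g = u ++ w ++ inv u /\ cyc w.
Proof. induction N as [|N IH]; intros g Hl Hr Hn.
  - destruct g; [congruence|simpl in Hl; lia].
  - destruct g as [|a g1]; [congruence|].
    destruct g1 as [|c g0].
    + exists [], [a]. split; [reflexivity|]. split; [discriminate|]. simpl. apply linv_neq.
    + destruct (exists_last (l:=c :: g0)) as [g2 [b E]]; [discriminate|].
      rewrite E in *. clear E.
      destruct (letter_eq_dec b (linv a)) as [Eb|Eb].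
      * subst b. destruct g2 as [|c2 g2].
        -- simpl in Hr. destruct Hr as [Hr _]. exfalso; apply Hr; reflexivity.
        -- change (a :: (c2 :: g2) ++ [linv a]) with ([a] ++ (c2 :: g2) ++ [linv a]) in Hr.
           apply reduced_app in Hr. destruct Hr as [_ [Hr _]].
           apply reduced_app in Hr. destruct Hr as [Hr _].
           destruct (IH (c2 :: g2)) as [u [w [Eg Hw]]]; auto.
           { simpl in Hl. rewrite length_app in Hl. simpl in Hl |- *. lia. }
           { discriminate. }
           exists (a :: u), w. split; auto. rewrite inv_cons, Eg.
           simpl. repeat rewrite <- app_assoc. reflexivity.
      * exists [], (a :: g2 ++ [b]). split; [simpl; rewrite app_nil_r; reflexivity|].
        split; [discriminate|]. change (a :: g2 ++ [b]) with ((a :: g2) ++ [b]).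
        rewrite last_app. simpl. intro E. apply Eb. rewrite E, linv_inv. reflexivity.
Qed.

Lemma decomp g : reduced g -> g <> [] -> exists u w, g = u ++ w ++ inv u /\ cyc w.
Proof. intros. eapply decomp_aux; eauto. Qed.

Local Open Scope Z_scope.

Lemma iter_n_shift {A} (f : A -> A) n x : iter_n n f (f x) = f (iter_n n f x).
Proof. induction n; simpl; congruence. Qed.

Lemma zpow_of_nat {A} (f g : A -> A) n x : zpow f g (Z.of_nat n) x = iter_n n f x.
Proof. destruct n; [reflexivity|]. simpl. rewrite SuccNat2Pos.id_succ. reflexivity. Qed.

Lemma zpow_neg_nat {A} (f g : A -> A) n x : zpow f g (- Z.of_nat n) x = iter_n n g x.
Proof. destruct n; [reflexivity|]. simpl. rewrite SuccNat2Pos.id_succ. reflexivity. Qed.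

Lemma Z_nat_cases (j : Z) : (exists n, j = Z.of_nat n) \/ (exists n, j = - Z.of_nat (S n)).
Proof. destruct (Z_le_gt_dec 0 j).
  - left. exists (Z.to_nat j). rewrite Z2Nat.id; auto.
  - right. exists (Z.to_nat (- j) - 1)%nat. rewrite Nat2Z.inj_succ, Nat2Z.inj_sub by lia.
    rewrite Z2Nat.id by lia. lia. Qed.

Section ZP.
Context {A : Type} (f g : A -> A) (Hfg : forall x, f (g x) = x) (Hgf : forall x, g (f x) = x).

Lemma zpow_succ j x : zpow f g (Z.succ j) x = f (zpow f g j x).
Proof. destruct (Z_nat_cases j) as [[n E]|[n E]]; subst j.
  - rewrite <- Nat2Z.inj_succ, !zpow_of_nat. reflexivity.
  - replace (Z.succ (- Z.of_nat (S n))) with (- Z.of_nat n) by lia.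
    rewrite !zpow_neg_nat. simpl. rewrite Hfg. reflexivity. Qed.

Lemma zpow_pred j x : zpow f g (Z.pred j) x = g (zpow f g j x).
Proof. rewrite <- (Z.succ_pred j) at 2. rewrite zpow_succ, Hgf. reflexivity. Qed.

Lemma zpow_add a b x : zpow f g a (zpow f g b x) = zpow f g (a + b) x.
Proof. induction a using Z.peano_ind.
  - reflexivity.
  - rewrite zpow_succ, IHa. replace (Z.succ a + b)%Z with (Z.succ (a + b)) by lia.
    rewrite zpow_succ. reflexivity.
  - rewrite zpow_pred, IHa. replace (Z.pred a + b)%Z with (Z.pred (a + b)) by lia.
    rewrite zpow_pred. reflexivity. Qed.

Lemma zpow_one x : zpow f g 1 x = f x.
Proof. reflexivity. Qed.

End ZP.

Lemma iter_conj {A} (f f' F Fi : A -> A) (HFi : forall x, Fi (F x) = x)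
  (Hf' : forall y, f' y = F (f (Fi y))) n x : iter_n n f' (F x) = F (iter_n n f x).
Proof. induction n; simpl; auto. rewrite IHn, Hf', HFi. reflexivity. Qed.

Lemma zpow_conj {A} (f g f' g' F Fi : A -> A) (HFi : forall x, Fi (F x) = x)
  (Hf' : forall y, f' y = F (f (Fi y))) (Hg' : forall y, g' y = F (g (Fi y))) j x :
  zpow f' g' j (F x) = F (zpow f g j x).
Proof. destruct j; simpl; auto; apply (iter_conj _ _ F Fi); auto. Qed.

Local Open Scope R_scope.

Lemma fg_ext {k} (g h : FG k) : fg_word g = fg_word h -> g = h.
Proof. destruct g as [wg vg rg], h as [wh vh rh]; simpl; intro E; subst wh.
  rewrite (proof_irrelevance _ vg vh), (proof_irrelevance _ rg rh). reflexivity. Qed.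

Lemma uc_comp {Omega} (dist : Omega -> Omega -> R) f g :
  unif_continuous dist f -> unif_continuous dist g -> unif_continuous dist (fun x => f (g x)).
Proof. intros Hf Hg eps He. destruct (Hf eps He) as [d1 [Hd1 H1]].
  destruct (Hg d1 Hd1) as [d2 [Hd2 H2]]. exists d2; split; auto. Qed.

Lemma uc_id {Omega} (dist : Omega -> Omega -> R) : unif_continuous dist (fun x => x).
Proof. intros eps He; exists eps; split; auto. Qed.

Section PH.
Context {k : nat} {Omega : Type} (dist : Omega -> Omega -> R) (Phi : FG k -> Omega -> Omega)
  (Hact : is_action dist Phi) (Huc : unif_continuous_action dist Phi).

Definition phl (l : letter) : Omega -> Omega :=
  match lt_dec (fst l) k with
  | left H => Phi (fg_letter (fst l) (snd l) H)
  | right _ => fun x => x end.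

Definition Ph (w : list letter) (x : Omega) : Omega := fold_right phl x w.

Lemma Ph_app a b x : Ph (a ++ b) x = Ph a (Ph b x).
Proof. unfold Ph. rewrite fold_right_app. reflexivity. Qed.

Lemma phl_letter i b H x : Phi (fg_letter i b H) x = phl (i, b) x.
Proof. unfold phl; simpl. destruct (lt_dec i k) as [H'|H']; [|contradiction].
  rewrite (proof_irrelevance _ H H'). reflexivity. Qed.

Lemma phl_cancel l x : phl l (phl (linv l) x) = x.
Proof. destruct l as [i b]. unfold phl, linv; simpl. destruct (lt_dec i k) as [H|H]; auto.
  destruct Hact as [_ [He Hm]]. rewrite <- Hm.
  replace (fg_mul (fg_letter i b H) (fg_letter i (negb b) H)) with (fg_e k); [apply He|].
  apply fg_ext. unfold fg_mul, fg_letter, fg_e; cbn [fg_word]. unfold wmul; cbn [fold_right]. unfold lmul. destruct (letter_eq_dec (i, negb b) (linv (i, b))) as [E|E]; [reflexivity|].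
  exfalso; apply E; reflexivity. Qed.

Lemma phl_cancel' l x : phl (linv l) (phl l x) = x.
Proof. rewrite <- (linv_inv l) at 2. apply phl_cancel. Qed.

Lemma Ph_lmul l h x : Ph (lmul l h) x = phl l (Ph h x).
Proof. unfold lmul. destruct h as [|a h]; auto. destruct letter_eq_dec as [E|E]; auto.
  subst a. simpl. rewrite phl_cancel. reflexivity. Qed.

Lemma Phi_word g x : Phi g x = Ph (fg_word g) x.
Proof. destruct g as [w v r]. simpl. revert v r; induction w as [|a w IH]; intros v r.
  - replace (mkFG [] v r) with (fg_e k) by (apply fg_ext; reflexivity).
    destruct Hact as [_ [He _]]. apply He.
  - assert (Ha : (fst a < k)%nat) by (inversion v; auto).
    assert (v' : valid k w) by (inversion v; auto).
    assert (r' : reduced w) by (exact (reduced_tail _ _ r)).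
    replace (mkFG (a :: w) v r) with (fg_mul (fg_letter (fst a) (snd a) Ha) (mkFG w v' r')).
    + destruct Hact as [_ [_ Hm]]. rewrite Hm, IH, phl_letter. destruct a; reflexivity.
    + apply fg_ext. simpl. unfold lmul. destruct w as [|c w]; [destruct a; reflexivity|].
      destruct letter_eq_dec as [E|E].
      * exfalso. simpl in r. destruct r as [r _]. apply r. rewrite E. destruct a; reflexivity.
      * destruct a; reflexivity. Qed.

Lemma Ph_inv_l w x : Ph (inv w) (Ph w x) = x.
Proof. induction w as [|a w IH]; auto. rewrite inv_cons, Ph_app. simpl.
  rewrite phl_cancel'. apply IH. Qed.

Lemma Ph_inv_r w x : Ph w (Ph (inv w) x) = x.
Proof. rewrite <- (inv_inv w) at 1. apply Ph_inv_l. Qed.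

Lemma uc_phl l : unif_continuous dist (phl l).
Proof. unfold phl. destruct lt_dec; [apply Huc| apply uc_id]. Qed.

Lemma uc_Ph w : unif_continuous dist (Ph w).
Proof. induction w as [|a w IH]; [apply uc_id|].
  apply (uc_comp dist (phl a) (Ph w)); auto using uc_phl. Qed.

Lemma pseudo_of_Y d (Y : list letter -> Omega) :
  (forall l h, (fst l < k)%nat -> dist (Y (lmul l h)) (phl l (Y h)) < d) ->
  pseudotrajectory dist Phi d (fun g => Y (fg_word g)).
Proof. intros HY i b H g. simpl. rewrite phl_letter. apply HY. simpl; auto. Qed.

End PH.

Local Open Scope Z_scope.

Lemma arith_contra (L m i n : nat) : (1 <= L < n)%nat -> (L + m * n = i * n)%nat -> False.
Proof. intros [H1 H2] E. destruct (le_lt_dec i m) as [Hi|Hi].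
  - assert (i * n <= m * n)%nat by (apply Nat.mul_le_mono_r; auto). lia.
  - assert (S m * n <= i * n)%nat by (apply Nat.mul_le_mono_r; auto). simpl in H. lia. Qed.

Section RR.
Context (w : list letter) (Hw : cyc w).

Definition l1i : letter := linv (hd dl w).
Definition wi : list letter := inv w.
Definition IWp (x : list letter) : Prop := exists i, (1 <= i)%nat /\ x = lpow w i.
Definition IBn (x : list letter) : Prop := exists i, x = l1i :: lpow wi i.

Fixpoint rr (x : list letter) : Z :=
  match x with
  | [] => 0
  | a :: t => rr t + (if excluded_middle_informative (IWp (a :: t)) then 1 else 0)
                   - (if excluded_middle_informative (IBn (a :: t)) then 1 else 0)
  end.

Lemma w_ne : w <> [].
Proof. destruct Hw; auto. Qed.

Lemma last_wi c : last wi c = l1i.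
Proof. unfold wi, l1i. rewrite (last_default _ c dl). apply last_inv, w_ne.
  intro E. apply w_ne. rewrite <- (inv_inv w). unfold wi in E. rewrite E. reflexivity. Qed.

Lemma wi_ne : wi <> [].
Proof. intro E. apply w_ne. rewrite <- (inv_inv w). unfold wi in E. rewrite E. reflexivity. Qed.

Lemma cycN : last w dl <> l1i.
Proof. destruct Hw as [_ H]. unfold l1i. intro E. apply H. rewrite E, linv_inv. reflexivity. Qed.

Lemma last_lpow_w i c : (1 <= i)%nat -> last (lpow w i) c = last w dl.
Proof. intro Hi. destruct i; [lia|]. rewrite last_lpow by apply w_ne. apply last_default, w_ne. Qed.

Lemma last_Bn i c : last (l1i :: lpow wi i) c = l1i.
Proof. rewrite last_cons. rewrite <- (last_wi l1i) at 1. rewrite last_lpow_gen by apply wi_ne.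
  apply last_wi. Qed.

Lemma last_IWp x : IWp x -> last x dl = last w dl.
Proof. intros [i [Hi E]]; subst; apply last_lpow_w; auto. Qed.

Lemma last_IBn x : IBn x -> last x dl = l1i.
Proof. intros [i E]; subst; apply last_Bn. Qed.

Lemma not_both x : IWp x -> IBn x -> False.
Proof. intros H1 H2. apply cycN. rewrite <- (last_IWp x), (last_IBn x); auto. Qed.

Lemma rr_cons a t : rr (a :: t) = rr t + (if excluded_middle_informative (IWp (a :: t)) then 1 else 0)
                   - (if excluded_middle_informative (IBn (a :: t)) then 1 else 0).
Proof. reflexivity. Qed.

Lemma rr_sufw : forall s q m, w = q ++ s -> q <> [] -> rr (s ++ lpow w m) = rr (lpow w m).
Proof. induction s as [|a s IH]; intros q m E Hq; [reflexivity|].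
  change ((a :: s) ++ lpow w m) with (a :: (s ++ lpow w m)). rewrite rr_cons.
  rewrite (IH (q ++ [a])) by first [rewrite <- app_assoc; exact E | intro X; apply app_eq_nil in X; destruct X; discriminate].
  destruct excluded_middle_informative as [[i [Hi Ei]]|_].
  - exfalso. assert (Hl := f_equal (@length letter) Ei). rewrite length_lpow in Hl.
    simpl in Hl. rewrite length_app, length_lpow in Hl.
    assert (Hlw := f_equal (@length letter) E). rewrite length_app in Hlw. simpl in Hlw.
    destruct q; [congruence|]. simpl in Hlw.
    apply (arith_contra (S (length s)) m i (length w)); [lia|]. simpl. lia.
  - destruct excluded_middle_informative as [HB|_]; [|lia].
    exfalso. apply cycN. rewrite <- (last_IBn _ HB).
    change (a :: s ++ lpow w m) with ((a :: s) ++ lpow w m).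
    rewrite last_app.
    replace (last (a :: s) dl) with (last w dl).
    + symmetry. apply last_lpow_gen; apply w_ne.
    + rewrite E, last_app. apply last_default; discriminate. Qed.

Lemma rr_lpow_w n : rr (lpow w n) = Z.of_nat n.
Proof. induction n; [reflexivity|].
  assert (Hex : exists a tw, w = a :: tw) by (generalize w_ne; destruct w; [tauto|eauto]).
  destruct Hex as [a [tw Ew]].
  assert (HS : lpow w (S n) = a :: (tw ++ lpow w n)) by (simpl; rewrite Ew at 1; reflexivity).
  rewrite HS. rewrite rr_cons. rewrite (rr_sufw tw [a] n) by (auto; discriminate).
  rewrite IHn. rewrite <- HS.
  destruct excluded_middle_informative as [_|N]; [|exfalso; apply N; exists (S n); split; auto; lia].
  destruct excluded_middle_informative as [HB|_].
  - exfalso. apply (not_both (lpow w (S n))); auto. exists (S n); split; auto; lia.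
  - lia. Qed.

Lemma rr_Bn m : rr (l1i :: lpow wi m) = rr (lpow wi m) - 1.
Proof. rewrite rr_cons.
  destruct excluded_middle_informative as [HW|_].
  - exfalso. apply cycN. rewrite <- (last_IWp _ HW). apply last_Bn.
  - destruct excluded_middle_informative as [_|N]; [lia|exfalso; apply N; exists m; auto]. Qed.

Lemma rr_sufwi tw : w = hd dl w :: tw -> forall s q m, inv tw = q ++ s ->
  rr (s ++ l1i :: lpow wi m) = rr (l1i :: lpow wi m).
Proof. intros Ew. induction s as [|a s IH]; intros q m E; [reflexivity|].
  change ((a :: s) ++ l1i :: lpow wi m) with (a :: (s ++ l1i :: lpow wi m)). rewrite rr_cons.
  rewrite (IH (q ++ [a])) by (rewrite <- app_assoc; exact E).
  destruct excluded_middle_informative as [HW|_].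
  - exfalso. apply cycN. rewrite <- (last_IWp _ HW).
    change (a :: s ++ l1i :: lpow wi m) with ((a :: s) ++ l1i :: lpow wi m).
    rewrite last_app. apply last_Bn.
  - destruct excluded_middle_informative as [[i Ei]|_]; [|lia].
    exfalso. assert (Hl := f_equal (@length letter) Ei). simpl in Hl.
    rewrite length_app in Hl. simpl in Hl. rewrite !length_lpow in Hl.
    assert (Hlw := f_equal (@length letter) E). rewrite length_app, length_inv in Hlw. simpl in Hlw.
    assert (Hn : length w = S (length tw)) by (rewrite Ew at 1; reflexivity).
    assert (Hwi : length wi = length w) by (unfold wi; apply length_inv).
    rewrite Hwi in Hl.
    apply (arith_contra (S (length s)) m i (length w)); lia. Qed.

Lemma rr_lpow_wi n : rr (lpow wi n) = - Z.of_nat n.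
Proof. induction n; [reflexivity|].
  assert (Hex : exists a tw, w = a :: tw) by (generalize w_ne; destruct w; [tauto|eauto]).
  destruct Hex as [a [tw Ew]].
  assert (Ew' : w = hd dl w :: tw) by (rewrite Ew at 2; simpl; auto).
  assert (HS : lpow wi (S n) = inv tw ++ l1i :: lpow wi n).
  { simpl. unfold wi at 1. rewrite Ew' at 1. rewrite inv_cons, <- app_assoc. reflexivity. }
  rewrite HS, (rr_sufwi tw Ew' (inv tw) []) by reflexivity.
  rewrite rr_Bn, IHn. lia. Qed.

Definition wz (j : Z) : list letter :=
  if Z.leb 0 j then lpow w (Z.to_nat j) else lpow wi (Z.to_nat (- j)).

Lemma rr_wz j : rr (wz j) = j.
Proof. unfold wz. destruct (Z.leb_spec 0 j).
  - rewrite rr_lpow_w. apply Z2Nat.id; auto.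
  - rewrite rr_lpow_wi. rewrite Z2Nat.id; lia. Qed.

Lemma wz_pos n : wz (Z.of_nat n) = lpow w n.
Proof. unfold wz. destruct (Z.leb_spec 0 (Z.of_nat n)); [|lia]. rewrite Nat2Z.id. auto. Qed.

Lemma wz_neg n : wz (- Z.of_nat n) = lpow wi n.
Proof. unfold wz. destruct (Z.leb_spec 0 (- Z.of_nat n)).
  - assert (n = 0%nat) by lia. subst. reflexivity.
  - rewrite Z.opp_involutive, Nat2Z.id. auto. Qed.

End RR.

Local Open Scope R_scope.

Lemma rr_step w l h : cyc w ->
  (rr w (l :: h) = (rr w h + 1)%Z /\ IWp w (l :: h)) \/
  (rr w (l :: h) = (rr w h - 1)%Z /\ IBn w (l :: h)) \/ rr w (l :: h) = rr w h.
Proof. intro Hw. rewrite rr_cons.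
  destruct excluded_middle_informative as [HW|NW];
  destruct excluded_middle_informative as [HB|NB].
  - exfalso; apply (not_both w Hw (l :: h)); auto.
  - left; split; auto; lia.
  - right; left; split; auto; lia.
  - right; right; lia. Qed.

Lemma lmul_cases l h : lmul l h = l :: h \/ h = linv l :: lmul l h.
Proof. unfold lmul. destruct h as [|a t]; [left; auto|].
  destruct letter_eq_dec as [E|E]; [right; subst; auto|left; auto]. Qed.

Lemma inv_conj u w : inv (u ++ w ++ inv u) = u ++ inv w ++ inv u.
Proof. rewrite !inv_app, inv_inv, app_assoc. reflexivity. Qed.

Lemma wz_nonzero w j : j <> 0%Z -> exists x n, (x = w \/ x = inv w) /\ wz w j = lpow x (S n).
Proof. intro Hj. destruct (Z_nat_cases j) as [[n E]|[n E]]; subst j.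
  - destruct n; [simpl in Hj; congruence|]. exists w, n. split; auto. apply wz_pos.
  - exists (inv w), n. split; auto. apply wz_neg. Qed.

Lemma gw_facts u w (Hc : cyc w) (Hred : reduced (u ++ w ++ inv u)) j : j <> 0%Z ->
  reduced (u ++ wz w j ++ inv u) /\
  (last (u ++ wz w j ++ inv u) dl = last (u ++ w ++ inv u) dl \/
   last (u ++ wz w j ++ inv u) dl = last (u ++ inv w ++ inv u) dl).
Proof. intro Hj. destruct (wz_nonzero w j Hj) as [x [n [Hx E]]]. rewrite E.
  assert (Hcx : cyc x) by (destruct Hx; subst; auto using cyc_inv).
  assert (Hrx : reduced (u ++ x ++ inv u)).
  { destruct Hx; subst; auto. rewrite <- inv_conj. apply reduced_inv; auto. }
  split; [apply reduced_conj; auto|].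
  assert (Hl : last (u ++ lpow x (S n) ++ inv u) dl = last (u ++ x ++ inv u) dl).
  { rewrite !last_app. rewrite last_lpow; [reflexivity|destruct Hcx; auto]. }
  rewrite Hl. destruct Hx; subst; auto. Qed.

Lemma pick_letter k (Hk : (2 <= k)%nat) (a b c : letter) :
  exists l, (fst l < k)%nat /\ l <> a /\ l <> b /\ l <> c.
Proof.
  destruct (classic (exists l, In l [(0%nat,true);(0%nat,false);(1%nat,true);(1%nat,false)]
     /\ l <> a /\ l <> b /\ l <> c)) as [[l [Hin H]]|N].
  - exists l. split; auto. simpl in Hin. intuition (subst; simpl; lia).
  - exfalso.
    assert (A : forall l, In l [(0%nat,true);(0%nat,false);(1%nat,true);(1%nat,false)] ->
       l = a \/ l = b \/ l = c).
    { intros l Hl. destruct (letter_eq_dec l a); auto. destruct (letter_eq_dec l b); auto.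
      destruct (letter_eq_dec l c); auto. exfalso. apply N. exists l; auto. }
    pose proof (A _ (or_introl eq_refl)) as A1.
    pose proof (A _ (or_intror (or_introl eq_refl))) as A2.
    pose proof (A _ (or_intror (or_intror (or_introl eq_refl)))) as A3.
    pose proof (A _ (or_intror (or_intror (or_intror (or_introl eq_refl))))) as A4.
    clear A N. intuition congruence. Qed.

Lemma iter_fix {A} (f : A -> A) (Hf : forall x, f x = x) n x : iter_n n f x = x.
Proof. induction n; simpl; auto. rewrite Hf; auto. Qed.

Lemma zpow_fix {A} (f g : A -> A) (Hf : forall x, f x = x) (Hg : forall x, g x = x) j x :
  zpow f g j x = x.
Proof. destruct j; simpl; auto; apply iter_fix; auto. Qed.

Section MAIN.
Context {k : nat} {Omega : Type} (dist : Omega -> Omega -> R) (Phi : FG k -> Omega -> Omega)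
  (Hmetric : is_metric dist) (Hact : is_action dist Phi) (Huc : unif_continuous_action dist Phi).

Lemma dsym x y : dist x y = dist y x.
Proof. destruct Hmetric as [_ [_ [H _]]]; auto. Qed.

Lemma dself x : dist x x = 0.
Proof. destruct Hmetric as [_ [H _]]. apply H; auto. Qed.

Notation Ph := (Ph Phi).
Notation phl := (phl Phi).

Lemma iter_Ph x n y : iter_n n (Ph x) y = Ph (lpow x n) y.
Proof. induction n; simpl; auto. rewrite Ph_app, IHn. reflexivity. Qed.

Lemma Ph_wz w j y : Ph (wz w j) y = zpow (Ph w) (Ph (wi w)) j y.
Proof. destruct (Z_nat_cases j) as [[n E]|[n E]]; subst j.
  - rewrite wz_pos, zpow_of_nat, iter_Ph. reflexivity.
  - rewrite wz_neg, zpow_neg_nat, iter_Ph. reflexivity. Qed.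

Lemma core (w : list letter) (Hw : cyc w) (Hvw : valid k w) (Hrw : reduced w) :
  action_shadowing dist Phi -> forall eps, 0 < eps -> exists d, 0 < d /\
    forall xs : Z -> Omega, (forall j, dist (xs (j + 1)%Z) (Ph w (xs j)) < d) ->
      exists z, forall j, dist (xs j) (Ph (wz w j) z) < eps.
Proof.
  intros S eps He. destruct (S eps He) as [d0 [Hd0 Hsh]].
  destruct (uc_phl dist Phi Huc (l1i w) d0 Hd0) as [d2 [Hd2 Hu]].
  exists (Rmin d0 d2). split; [apply Rmin_pos; auto|].
  intros xs Hxs.
  set (F := Ph w). set (G := Ph (wi w)).
  assert (Hfg : forall x, F (G x) = x) by (intro; apply (Ph_inv_r dist Phi Hact); auto).
  assert (Hgf : forall x, G (F x) = x) by (intro; apply (Ph_inv_l dist Phi Hact); auto).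
  set (zp := zpow F G).
  set (zz := fun j => zp (- j)%Z (xs j)).
  assert (K1 : forall j, Ph (wz w j) (zz j) = xs j).
  { intro j. rewrite Ph_wz. unfold zz, zp. fold F G. rewrite (zpow_add F G Hfg Hgf).
    replace (j + - j)%Z with 0%Z by lia. reflexivity. }
  assert (K2 : forall j, Ph (wz w j) (zz (j - 1)%Z) = F (xs (j - 1)%Z)).
  { intro j. rewrite Ph_wz. unfold zz, zp. fold F G. rewrite (zpow_add F G Hfg Hgf).
    replace (j + - (j - 1))%Z with 1%Z by lia. reflexivity. }
  assert (P1 : forall j, dist (xs j) (F (xs (j - 1)%Z)) < Rmin d0 d2).
  { intro j. specialize (Hxs (j - 1)%Z). replace (j - 1 + 1)%Z with j in Hxs by lia. exact Hxs. }
  assert (P2 : forall j, dist (phl (l1i w) (F (xs (j - 1)%Z))) (phl (l1i w) (xs j)) < d0).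
  { intro j. apply Hu. rewrite dsym. specialize (P1 j). pose proof (Rmin_r d0 d2). lra. }
  set (Y := fun h => Ph h (zz (rr w h))).
  assert (HY : forall l h, dist (Y (lmul l h)) (phl l (Y h)) < d0).
  { intros l h. unfold Y. rewrite <- (Ph_lmul dist Phi Hact).
    destruct (lmul_cases l h) as [E|E].
    - rewrite E. destruct (rr_step w l h Hw) as [[E1 [i [Hi Ei]]]|[[E1 [i Ei]]|E1]].
      + assert (R1 : rr w (l :: h) = Z.of_nat i) by (rewrite Ei; apply rr_lpow_w; auto).
        assert (R2 : rr w h = (Z.of_nat i - 1)%Z) by lia.
        rewrite R1, R2, Ei, <- wz_pos, K1, K2. specialize (P1 (Z.of_nat i)).
        pose proof (Rmin_l d0 d2). lra.
      + assert (R1 : rr w h = (- Z.of_nat i)%Z).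
        { assert (Eh := f_equal (@tl letter) Ei). simpl in Eh. rewrite Eh. apply rr_lpow_wi; auto. }
        rewrite E1, R1. assert (Eh := f_equal (@tl letter) Ei). assert (El := f_equal (hd dl) Ei). simpl in Eh, El. rewrite Eh, El.
        change (Ph (l1i w :: lpow (wi w) i) ?y) with (phl (l1i w) (Ph (lpow (wi w) i) y)).
        rewrite <- wz_neg, K1. replace (- Z.of_nat i - 1)%Z with (- Z.of_nat i - 1)%Z by lia.
        rewrite K2. apply P2.
      + rewrite E1, dself. pose proof (Rmin_l d0 d2). lra.
    - set (t := lmul l h) in *. rewrite E.
      destruct (rr_step w (linv l) t Hw) as [[E1 [i [Hi Ei]]]|[[E1 [i Ei]]|E1]].
      + assert (R1 : rr w (linv l :: t) = Z.of_nat i) by (rewrite Ei; apply rr_lpow_w; auto).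
        assert (R2 : rr w t = (Z.of_nat i - 1)%Z) by lia.
        rewrite R1, R2.
        assert (Hl : l = l1i w).
        { unfold l1i. assert (H1 := f_equal (hd dl) Ei). simpl in H1.
          destruct i; [lia|]. rewrite hd_lpow in H1 by (apply w_ne; auto).
          rewrite <- H1, linv_inv. reflexivity. }
        assert (Ht : forall y, Ph t y = phl l (Ph (linv l :: t) y)).
        { intro y. simpl. rewrite (phl_cancel dist Phi Hact). reflexivity. }
        rewrite !Ht, Ei, <- wz_pos, K1, K2, Hl. apply P2.
      + assert (R1 : rr w t = (- Z.of_nat i)%Z).
        { assert (Eh := f_equal (@tl letter) Ei). simpl in Eh. rewrite Eh. apply rr_lpow_wi; auto. }
        rewrite E1, R1. assert (Eh := f_equal (@tl letter) Ei). assert (El := f_equal (hd dl) Ei). simpl in Eh, El. rewrite Eh, <- wz_neg, K1, K2.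
         specialize (P1 (- Z.of_nat i)%Z). pose proof (Rmin_l d0 d2). lra.
      + rewrite E1, dself. pose proof (Rmin_l d0 d2). lra. }
  destruct (Hsh _ (pseudo_of_Y dist Phi d0 Y (fun l h _ => HY l h))) as [z Hz].
  exists z. intro j.
  assert (Hv : valid k (wz w j)).
  { unfold wz, wi. destruct (0 <=? j)%Z; apply valid_lpow; [auto| apply valid_inv; auto]. }
  assert (Hr : reduced (wz w j)).
  { unfold wz, wi. destruct (0 <=? j)%Z; apply reduced_lpow;
    [auto | auto | apply cyc_inv; auto | apply reduced_inv; auto]. }
  specialize (Hz (mkFG (wz w j) Hv Hr)). simpl in Hz. rewrite (Phi_word dist Phi Hact) in Hz. simpl in Hz.
  unfold Y in Hz. rewrite (rr_wz w Hw), K1 in Hz. exact Hz.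
Qed.


Lemma word_decomp g : g <> fg_e k -> exists u w, fg_word g = u ++ w ++ inv u /\ cyc w /\
  valid k u /\ valid k w /\ reduced w.
Proof. intro Hg. assert (Hn : fg_word g <> []).
  { intro E. apply Hg. apply fg_ext. rewrite E. reflexivity. }
  destruct (decomp (fg_word g) (fg_red g) Hn) as [u [w [E Hc]]].
  exists u, w. split; auto. split; auto.
  pose proof (fg_valid g) as Hv. rewrite E in Hv. apply valid_app_inv in Hv. destruct Hv as [Hu Hv].
  apply valid_app_inv in Hv. destruct Hv as [Hw _]. split; auto. split; auto.
  pose proof (fg_red g) as Hr. rewrite E in Hr. apply reduced_app in Hr. destruct Hr as [_ [Hr _]].
  apply reduced_app in Hr. tauto. Qed.

Lemma Phi_conj g u w : fg_word g = u ++ w ++ inv u -> forall j y,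
  zpow (Phi g) (Ph (u ++ inv w ++ inv u)) j y = Ph u (Ph (wz w j) (Ph (inv u) y)).
Proof. intros Eg j y.
  replace (Phi g) with (Ph (u ++ w ++ inv u)).
  2:{ apply functional_extensionality. intro x. rewrite (Phi_word dist Phi Hact), Eg. reflexivity. }
  rewrite <- ((Ph_inv_r dist Phi Hact) u y) at 1.
  rewrite (zpow_conj (Ph w) (Ph (inv w)) _ _ (Ph u) (Ph (inv u))).
  - rewrite Ph_wz. reflexivity.
  - intro; apply (Ph_inv_l dist Phi Hact).
  - intro; rewrite !Ph_app; reflexivity.
  - intro; rewrite !Ph_app; reflexivity. Qed.

Lemma part2 g : g <> fg_e k -> ~ hom_shadowing dist (Phi g) -> ~ action_shadowing dist Phi.
Proof. intros Hg Hns S. apply Hns.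
  destruct (word_decomp g Hg) as [u [w [Eg [Hc [Hvu [Hvw Hrw]]]]]].
  exists (Ph (u ++ inv w ++ inv u)). split.
  - split; intro x; rewrite (Phi_word dist Phi Hact), Eg.
    + rewrite <- inv_conj. apply (Ph_inv_l dist Phi Hact).
    + rewrite <- inv_conj. apply (Ph_inv_r dist Phi Hact).
  - intros eps He.
    destruct (uc_Ph dist Phi Huc u eps He) as [d1 [Hd1 Hu1]].
    destruct (core w Hc Hvw Hrw S d1 Hd1) as [d [Hd Hcore]].
    destruct (uc_Ph dist Phi Huc (inv u) d Hd) as [d2 [Hd2 Hu2]].
    exists d2. split; auto. intros x Hx.
    set (xs := fun j => Ph (inv u) (x j)).
    destruct (Hcore xs) as [z Hz].
    { intro j. unfold xs. destruct (Hx j) as [H1 _]. apply Hu2 in H1.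
      rewrite (Phi_word dist Phi Hact), Eg, !Ph_app, (Ph_inv_l dist Phi Hact) in H1. exact H1. }
    exists (Ph u z). intro j. rewrite Phi_conj by auto. rewrite (Ph_inv_l dist Phi Hact).
    rewrite <- ((Ph_inv_r dist Phi Hact) u (x j)). apply Hu1. apply Hz. Qed.

Lemma part1 g : (2 <= k)%nat -> non_discrete dist -> expansive dist (Phi g) ->
  ~ action_shadowing dist Phi.
Proof. intros Hk Hnd [finv [[Hi1 Hi2] [Delta [HD Hex]]]] S.
  destruct Hnd as [x0 Hx0].
  destruct (classic (g = fg_e k)) as [Ge|Gne].
  - subst g. destruct Hact as [_ [He _]].
    assert (Hf : forall v, finv v = v) by (intro v; rewrite <- (He v) at 1; apply Hi1).
    destruct (Hx0 Delta HD) as [y [Hy Hd]]. apply Hy. symmetry. apply Hex. intro j.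
    rewrite !zpow_fix; auto.
  - destruct (word_decomp g Gne) as [u [w [Eg [Hc [Hvu [Hvw Hrw]]]]]].
    assert (Hred : reduced (u ++ w ++ inv u)) by (rewrite <- Eg; apply fg_red).
    assert (Hfinv : finv = Ph (u ++ inv w ++ inv u)).
    { apply functional_extensionality. intro v.
      rewrite <- ((Ph_inv_r dist Phi Hact) (u ++ w ++ inv u) v) at 1.
      
      replace (Ph (u ++ w ++ inv u)) with (Phi g).
      2:{ apply functional_extensionality. intro; rewrite (Phi_word dist Phi Hact), Eg; auto. }
      rewrite Hi1, inv_conj. reflexivity. }
    subst finv.
    set (L1 := last (u ++ w ++ inv u) dl). set (L2 := last (u ++ inv w ++ inv u) dl).
    destruct (pick_letter k Hk L1 L2 L1) as [b2 [Hb2 [Nb21 [Nb22 _]]]].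
    destruct (pick_letter k Hk (linv L1) (linv L2) (linv b2)) as [b1 [Hb1 [Nb11 [Nb12 Nb13]]]].
    set (m := [b1; b2]).
    destruct (S Delta HD) as [d [Hd Hsh]].
    destruct (uc_Ph dist Phi Huc m d Hd) as [dm [Hdm Hum]].
    destruct (uc_Ph dist Phi Huc [b2] d Hd) as [db [Hdb Hub]].
    destruct (Hx0 (Rmin dm db) (Rmin_pos _ _ Hdm Hdb)) as [y [Hy Hdy]].
    set (pp := fun h => if excluded_middle_informative (exists q, h = q ++ m) then y else x0).
    assert (PT : forall h, (exists q, h = q ++ m) -> pp h = y).
    { intros h0 H0. unfold pp. destruct excluded_middle_informative; tauto. }
    assert (PF : forall h, ~ (exists q, h = q ++ m) -> pp h = x0).
    { intros h0 H0. unfold pp. destruct excluded_middle_informative; tauto. }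
    set (Y := fun h => Ph h (pp h)).
    assert (HY : forall l h, dist (Y (lmul l h)) (phl l (Y h)) < d).
    { intros l h. unfold Y. rewrite <- (Ph_lmul dist Phi Hact).
      set (h' := lmul l h). assert (Hc' := lmul_cases l h). fold h' in Hc'.
      destruct (classic (exists q, h' = q ++ m)) as [[q Eq]|N1];
      destruct (classic (exists q, h = q ++ m)) as [[q' Eq']|N2].
      - rewrite (PT h'), (PT h) by eauto. rewrite dself; lra.
      - rewrite (PT h'), (PF h) by eauto. destruct Hc' as [E|E].
        + rewrite E in Eq. destruct q as [|c q].
          * simpl in Eq. rewrite E, Eq. apply Hum. rewrite dsym. pose proof (Rmin_l dm db). lra.
          * exfalso. apply N2. exists q. simpl in Eq. injection Eq; auto.
        + exfalso. apply N2. exists (linv l :: q). rewrite E, Eq. reflexivity.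
      - rewrite (PF h'), (PT h) by eauto. destruct Hc' as [E|E].
        + exfalso. apply N1. exists (l :: q'). rewrite E, Eq'. reflexivity.
        + rewrite E in Eq'. destruct q' as [|c q'].
          * simpl in Eq'. assert (Et := f_equal (@tl letter) Eq'). simpl in Et.
            rewrite Et. apply Hub. pose proof (Rmin_r dm db). lra.
          * exfalso. apply N1. exists q'. simpl in Eq'. injection Eq'; auto.
      - rewrite (PF h'), (PF h) by auto. rewrite dself; lra. }
    destruct (Hsh _ (pseudo_of_Y dist Phi d Y (fun l h _ => HY l h))) as [z Hz].
    set (gw := fun j => if Z.eqb j 0 then [] else u ++ wz w j ++ inv u).
    assert (Hgw : forall j v, Ph (gw j) v = Ph u (Ph (wz w j) (Ph (inv u) v))).
    { intros j v. unfold gw. destruct (Z.eqb_spec j 0).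
      - subst j. simpl. symmetry. apply (Ph_inv_r dist Phi Hact).
      - rewrite !Ph_app. reflexivity. }
    assert (Hvgw : forall j, valid k (gw j)).
    { intro j. unfold gw. destruct (Z.eqb j 0); [constructor|].
      apply valid_app; auto. apply valid_app; [|apply valid_inv; auto].
      unfold wz, wi. destruct (0 <=? j)%Z; apply valid_lpow; [auto| apply valid_inv; auto]. }
    assert (Hrgw : forall j, reduced (gw j) /\ (gw j = [] \/ last (gw j) dl = L1 \/ last (gw j) dl = L2)).
    { intro j. unfold gw. destruct (Z.eqb_spec j 0); [simpl; auto|].
      destruct (gw_facts u w Hc Hred j n) as [A1 A2]. split; auto. }
    assert (Hm : valid k m) by (repeat constructor; auto).
    assert (Hrm : reduced m).
    { simpl. split; auto. intro E. apply Nb13. rewrite E, linv_inv. reflexivity. }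
    assert (Hns : forall j, ~ exists q, gw j = q ++ m).
    { intros j [q Eq]. destruct (Hrgw j) as [_ [E|[E|E]]].
      - rewrite E in Eq. symmetry in Eq. apply app_eq_nil in Eq. destruct Eq; discriminate.
      - apply Nb21. rewrite <- E, Eq, last_app. reflexivity.
      - apply Nb22. rewrite <- E, Eq, last_app. reflexivity. }
    assert (Hrgm : forall j, reduced (gw j ++ m)).
    { intro j. destruct (Hrgw j) as [R J]. apply reduced_app. split; [exact R|].
      split; [exact Hrm|]. unfold joinable. destruct J as [E|[E|E]]; [left; exact E| |];
      right; right; change (hd dl m) with b1; rewrite E; auto. }
    assert (Hvgm : forall j, valid k (gw j ++ m)) by (intro; apply valid_app; auto).
    assert (Ex0 : x0 = z).
    { apply Hex. intro j. rewrite !(Phi_conj g u w Eg).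
      specialize (Hz (mkFG (gw j) (Hvgw j) (proj1 (Hrgw j)))). simpl in Hz.
      rewrite (Phi_word dist Phi Hact) in Hz. simpl in Hz. unfold Y, pp in Hz.
      destruct excluded_middle_informative as [X|_]; [exfalso; apply (Hns j); auto|].
      rewrite !Hgw in Hz. exact Hz. }
    assert (Ey : Ph m y = Ph m z).
    { apply Hex. intro j. rewrite !(Phi_conj g u w Eg).
      specialize (Hz (mkFG (gw j ++ m) (Hvgm j) (Hrgm j))). simpl in Hz.
      rewrite (Phi_word dist Phi Hact) in Hz. simpl in Hz. unfold Y, pp in Hz.
      destruct excluded_middle_informative as [_|X]; [|exfalso; apply X; eauto].
      rewrite !Ph_app, !Hgw in Hz. exact Hz. }
    apply Hy. rewrite Ex0. rewrite <- ((Ph_inv_l dist Phi Hact) m y), Ey.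
    apply (Ph_inv_l dist Phi Hact). Qed.

End MAIN.

Theorem theorem4 (k : nat) (Hk : (2 <= k)%nat)
  (Omega : Type) (dist : Omega -> Omega -> R)
  (Hmetric : is_metric dist) (Hnd : non_discrete dist)
  (Phi : FG k -> Omega -> Omega)
  (Hact : is_action dist Phi) (Huc : unif_continuous_action dist Phi) :
  ((exists g : FG k, expansive dist (Phi g)) -> ~ action_shadowing dist Phi) /\
  ((exists g : FG k, g <> fg_e k /\ ~ hom_shadowing dist (Phi g)) ->
     ~ action_shadowing dist Phi).
Proof. split.
  - intros [g Hg]. eapply part1; eauto.
  - intros [g [Hg Hn]]. eapply part2; eauto. Qed.
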